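(* Let $m\ge3$ and let $\mathscr{P}$ be a symmetric irreducible transition probability tensor of order $m$ and dimension $2$. Then $\mathscr{P}$ has a unique stationary probability vector, namely $(\tfrac12,\tfrac12)^\top$.
   Context: $\mathscr{P}=(p_{i_1\cdots i_m})$ is a tensor of order $m$ and dimension $n$ with real entries indexed by $i_1,\dots,i_m\in\{1,\dots,n\}$; here $n=2$. It is symmetric if its entries are invariant under every permutation of indices. It is a transition probability tensor if $0\le p_{i_1\cdots i_m}\le1$ and $\sum_{i_1=1}^np_{i_1i_2\cdots i_m}=1$ for all $i_2,\dots,i_m$. The tensor is reducible if there is a nonempty proper subset $I\subset\{1,\dots,n\}$ such that $p_{i_1i_2\cdots i_m}=0$ for all $i_1\in I$ and all $i_2,\dots,i_m\notin I$. It is irreducible if it is not reducible. A stationary probability vector of $\mathscr{P}$ is a vector $z=(z_1,z_2)^\top$ with $z_1,z_2\ge0$ and $z_1+z_2=1$ such that $$\sum_{i_2,\dots,i_m=1}^2p_{ii_2\cdots i_m}z_{i_2}\cdots z_{i_m}=z_i\quad\text{for } i=1,2.$$ *)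

(* Defs.v *)
From HB Require Import structures.
From mathcomp Require Import all_boot all_order all_algebra all_fingroup.
Set Implicit Arguments. Unset Strict Implicit. Unset Printing Implicit Defensive.
Import Order.TTheory GRing.Theory Num.Theory.
Local Open Scope ring_scope.

(* A tensor of order m and dimension n over R: an entry p_{i_1...i_m} for each
   index function f : 'I_m -> 'I_n, where f k is the (k+1)-th index i_{k+1}. *)
Definition tensor (R : Type) (m n : nat) := {ffun 'I_m -> 'I_n} -> R.

Definition tensor_symmetric (R : Type) m n (P : tensor R m n) : Prop :=
  forall (s : 'S_m) (f : {ffun 'I_m -> 'I_n}),
    P [ffun k => f (s k)] = P f.

Definition transition_tensor (R : numDomainType) m n (P : tensor R m n) : Prop :=
  (forall f, 0 <= P f <= 1) /\
  (forall g : {ffun 'I_m -> 'I_n},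
     \sum_(f : {ffun 'I_m -> 'I_n} |
            [forall k : 'I_m, (val k != 0%N) ==> (f k == g k)]) P f = 1).

Definition tensor_reducible (R : nzRingType) m n (P : tensor R m n) : Prop :=
  exists I : {set 'I_n},
    [/\ I != set0, I != setT &
        forall f : {ffun 'I_m -> 'I_n},
          (forall k : 'I_m, val k = 0%N -> f k \in I) ->
          (forall k : 'I_m, val k <> 0%N -> f k \notin I) ->
          P f = 0].

Definition tensor_irreducible (R : nzRingType) m n (P : tensor R m n) : Prop :=
  ~ tensor_reducible P.

Definition stationary_prob (R : numDomainType) m n (P : tensor R m n)
    (z : 'I_n -> R) : Prop :=
  [/\ forall i, 0 <= z i,
      \sum_(i < n) z i = 1 &
      forall i : 'I_n,
        \sum_(f : {ffun 'I_m -> 'I_n} |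
               [forall k : 'I_m, (val k == 0%N) ==> (f k == i)])
          P f * \prod_(k : 'I_m | val k != 0%N) z (f k) = z i].

(* Main.v *)
Require Import Defs.
From HB Require Import structures.
From mathcomp Require Import all_boot all_order all_algebra all_fingroup.
From mathcomp Require Import ring lra.
Import Order.TTheory GRing.Theory Num.Theory.
Local Open Scope ring_scope.

Set Implicit Arguments.
Unset Strict Implicit.
Section Aux.
Variable R : realFieldType.
Variable m : nat.
Notation T := {ffun 'I_m.+1 -> 'I_2}.

Definition sg2 (j : 'I_2) : R := if j == ord0 then 1 else -1.
Definition esg (f : T) : R := \prod_(k < m.+1) sg2 (f k).
Definition upd (f : T) (k : 'I_m.+1) (v : 'I_2) : T :=
  [ffun j => if j == k then v else f j].

Lemma sumprod (i : 'I_2) (F : 'I_2 -> R) :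
  \sum_(f : T | [forall k : 'I_m.+1, (val k == 0%N) ==> (f k == i)])
     \prod_(k : 'I_m.+1 | val k != 0%N) F (f k) = (F ord0 + F ord_max) ^+ m.
Proof.
rewrite (eq_bigl (fun f : T => f \in pfamily i (fun k : 'I_m.+1 => val k != 0%N) (fun _ => xpredT))).
  rewrite -(big_distr_big_dep i (fun k : 'I_m.+1 => val k != 0%N) (fun _ => xpredT) (fun _ j => F j)) /= big_ord_recr /= big_ord1.
  rewrite prodr_const.
  have -> : widen_ord (m:=2) (leqnSn 1) ord0 = ord0 by apply/val_inj.
  congr (_ ^+ _).
  have -> : #|[pred k : 'I_m.+1 | val k != 0%N]| = #|predC1 (ord0 : 'I_m.+1)|.
    by apply: eq_card.
  by rewrite cardC1 card_ord.
move=> f /=; apply/forallP/pfamilyP.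
- move=> H; split.
  + apply/subsetP=> k; rewrite !inE; apply: contraNN => /eqP Hk.
    have := H k; rewrite Hk eqxx /=; by move/eqP ->.
  + by move=> k _.
- case=> /subsetP H _ k; apply/implyP => Hk.
  apply/negPn; apply/negP => Hfk; move: (H k); rewrite !inE Hfk => /(_ isT).
  by rewrite unfold_in /= Hk.
Qed.

Lemma I2cases (v : 'I_2) : v = ord0 \/ v = ord_max.
Proof. by case: v => [[|[|x]] Hx] //; [left|right]; apply/val_inj. Qed.

Lemma upd_same (f : T) k : upd f k (f k) = f.
Proof. by apply/ffunP => j; rewrite ffunE; case: eqP => // ->. Qed.

Lemma sum2 (Pf : T -> R) (g : T) :
  \sum_(h : T | [forall j : 'I_m.+1, (val j != 0%N) ==> (h j == g j)]) Pf h
  = Pf (upd g ord0 ord0) + Pf (upd g ord0 ord_max).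
Proof.
have Hp : forall v, [forall j : 'I_m.+1, (val j != 0%N) ==> (upd g ord0 v j == g j)].
  move=> v; apply/forallP => j; apply/implyP; rewrite ffunE => Hj.
  have -> : (j == ord0) = false by apply/negbTE.
  by [].
rewrite (bigD1 (upd g ord0 ord0)) ?Hp //=.
rewrite (bigD1 (upd g ord0 ord_max)) /=; last first.
  rewrite Hp /=; apply/eqP => /ffunP /(_ ord0); rewrite !ffunE eqxx.
  by move/(congr1 val).
rewrite big1 ?addr0 // => h /andP[/andP[Hh H1] H2].
have Eh : h = upd g ord0 (h ord0).
  apply/ffunP => j; rewrite ffunE; case: eqP => [->//|/eqP Hj].
  by move/forallP: Hh => /(_ j) /implyP /(_ Hj) /eqP.
by case: (I2cases (h ord0)) Eh => -> Eh; [move: H1|move: H2]; rewrite -Eh eqxx.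
Qed.

Variable P : tensor R m.+1 2.
Hypothesis Psym : tensor_symmetric P.
Hypothesis Ptr : transition_tensor P.

Lemma flip0 f : P (upd f ord0 ord0) + P (upd f ord0 ord_max) = 1.
Proof. by case: Ptr => _ /(_ f); rewrite sum2. Qed.

Lemma symk f k v :
  P (upd f k v) = P (upd [ffun j => f (tperm ord0 k j)] ord0 v).
Proof.
rewrite -(Psym (tperm ord0 k)); congr P; apply/ffunP => j; rewrite !ffunE.
case: tpermP => [->|->|/eqP H1 /eqP H2].
- by rewrite !eqxx.
- by rewrite eq_sym.
- by rewrite (negbTE H1) (negbTE H2).
Qed.

Lemma flipk f k : P (upd f k ord0) + P (upd f k ord_max) = 1.
Proof. by rewrite (symk f k ord0) (symk f k ord_max) flip0. Qed.

Lemma esg_upd f k v : esg (upd f k v) = sg2 v * \prod_(j | j != k) sg2 (f j).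
Proof.
rewrite /esg (bigD1 k) //= ffunE eqxx; congr (_ * _).
by apply: eq_bigr => j /negbTE Hj; rewrite ffunE Hj.
Qed.

Definition Q f := (P f - 2^-1) * esg f.
Definition c0 : T := [ffun _ => ord0].

Lemma Q_upd f k : Q f = Q (upd f k ord0).
Proof.
have key : Q (upd f k ord_max) = Q (upd f k ord0).
  rewrite /Q !esg_upd /sg2 eqxx.
  have -> : (ord_max == ord0 :> 'I_2) = false by [].
  have -> : P (upd f k ord_max) = 1 - P (upd f k ord0).
    by have := flipk f k; lra.
  by rewrite mulN1r mul1r mulrN -mulNr; congr (_ * _); field.
case: (I2cases (f k)) => E.
- by have U := upd_same f k; rewrite E in U; rewrite U.
- by have U := upd_same f k; rewrite E in U; rewrite -key U.
Qed.

Lemma Q_const f : Q f = Q c0.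
Proof.
suff H : forall n (g : T), (forall k : 'I_m.+1, (n <= k)%N -> g k = ord0) -> Q g = Q c0.
  by apply: (H m.+1) => k; rewrite leqNgt ltn_ord.
elim=> [|n IH] g Hg.
- by congr Q; apply/ffunP => k; rewrite ffunE; exact: Hg.
- case: (ltnP n m.+1) => Hn.
  + rewrite (Q_upd g (Ordinal Hn)); apply: IH => k Hk; rewrite ffunE.
    case: eqP => // /eqP Hne; apply: Hg; rewrite ltn_neqAle Hk andbT.
    apply: contra Hne => /eqP E; apply/eqP/val_inj => /=; by rewrite E.
  + apply: IH => k Hk; apply: Hg.
    by move: (leq_trans (ltn_ord k) Hn); rewrite ltnNge Hk.
Qed.

Lemma esg2 f : esg f * esg f = 1.
Proof.
rewrite /esg -big_split /=; apply: big1 => k _; rewrite /sg2.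
by case: eqP => _; rewrite ?mulr1 ?mulrNN ?mulr1.
Qed.

Lemma esg_c0 : esg c0 = 1.
Proof. by apply: big1 => k _; rewrite ffunE /sg2 eqxx. Qed.

Lemma Pform f : P f = 2^-1 + (P c0 - 2^-1) * esg f.
Proof.
have := Q_const f; rewrite /Q esg_c0 mulr1 => <-.
by rewrite -mulrA esg2 mulr1 addrC subrK.
Qed.

Lemma esg0 f : esg f = sg2 (f ord0) * \prod_(k : 'I_m.+1 | val k != 0%N) sg2 (f k).
Proof. by rewrite /esg (bigD1 ord0). Qed.

Lemma card_nz : #|[pred k : 'I_m.+1 | val k != 0%N]| = m.
Proof.
have -> : #|[pred k : 'I_m.+1 | val k != 0%N]| = #|predC1 (ord0 : 'I_m.+1)|.
  by apply: eq_card.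
by rewrite cardC1 card_ord.
Qed.

Lemma stat_sum i (z : 'I_2 -> R) :
  \sum_(f : T | [forall k : 'I_m.+1, (val k == 0%N) ==> (f k == i)])
      P f * \prod_(k : 'I_m.+1 | val k != 0%N) z (f k)
  = 2^-1 * (z ord0 + z ord_max) ^+ m
    + (P c0 - 2^-1) * sg2 i * (z ord0 - z ord_max) ^+ m.
Proof.
rewrite (eq_bigr (fun f : T => 2^-1 * \prod_(k : 'I_m.+1 | val k != 0%N) z (f k)
   + (P c0 - 2^-1) * sg2 i * \prod_(k : 'I_m.+1 | val k != 0%N) (sg2 (f k) * z (f k)))); last first.
  move=> f /forallP /(_ ord0) /= /eqP Hf0.
  rewrite Pform esg0 Hf0 big_split /=; ring.
rewrite big_split /= -!mulr_sumr (sumprod i z) (sumprod i (fun j => sg2 j * z j)) /sg2 eqxx.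
have -> : (ord_max == ord0 :> 'I_2) = false by [].
by rewrite mul1r mulN1r.
Qed.

End Aux.
Lemma esg_spec (R : realFieldType) m (f : {ffun 'I_m.+1 -> 'I_2}) (v w : 'I_2) :
  f ord0 = v -> (forall k : 'I_m.+1, val k <> 0%N -> f k = w) ->
  esg R f = sg2 R v * sg2 R w ^+ m.
Proof.
move=> H0 H; rewrite esg0 H0; congr (_ * _).
rewrite (eq_bigr (fun _ => sg2 R w)); last by move=> k /eqP Hk; rewrite H.
by rewrite prodr_const card_nz.
Qed.

Theorem corollary2p2 (R : realFieldType) (m : nat) (P : tensor R m 2) :
  (3 <= m)%N ->
  tensor_symmetric P ->
  tensor_irreducible P ->
  transition_tensor P ->
  forall z : 'I_2 -> R, stationary_prob P z <-> (forall i, z i = 2^-1).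
Proof.
case: m P => [|[|[|n]]] P // _ Hsym Hirr Htr z.
have Pf := Pform Hsym Htr.
have SS := stat_sum Hsym Htr.
set b := P (c0 n.+2) - 2^-1 in Pf SS.
have Hb : -1 <= 2 * b <= 1.
  case: Htr => /(_ (c0 n.+2)) /andP [H1 H2] _; rewrite /b; apply/andP; split; lra.
have E1 : lift ord0 ord0 = ord_max :> 'I_2 by apply/val_inj.
have Ez : forall i : 'I_2, i = ord0 \/ i = ord_max by exact: I2cases.
have Hred : forall v w : 'I_2, v != w ->
   (forall f : {ffun 'I_n.+3 -> 'I_2}, f ord0 = v -> (forall k : 'I_n.+3, val k <> 0%N -> f k = w) -> P f = 0) -> False.
  move=> v w Hvw H; apply: Hirr; exists [set v]; split.
  - by apply/set0Pn; exists v; rewrite in_set1.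
  - apply/negP => /eqP E; have : w \in [set v] by rewrite E inE.
    by rewrite in_set1 eq_sym (negbTE Hvw).
  - move=> f H0 H1; apply: H.
      by have := H0 ord0 erefl; rewrite in_set1 => /eqP.
    move=> k Hk; have := H1 k Hk; rewrite in_set1.
    by case: (Ez (f k)) (Ez v) (Ez w) Hvw => -> [->|->] [->|->].
have Hbh : b != 2^-1.
  apply/eqP => Eb; apply: (Hred ord_max ord0) => // f H0 H1.
  rewrite Pf (esg_spec R H0 H1) Eb /sg2 eqxx expr1n mulr1.
  by rewrite mulrN1 subrr.
have Hbo : ~~ odd n -> b != - 2^-1.
  move=> Hn; apply/eqP => Eb; apply: (Hred ord0 ord_max) => // f H0 H1.
  rewrite Pf (esg_spec R H0 H1) Eb /sg2 eqxx mul1r.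
  have -> : (ord_max == ord0 :> 'I_2) = false by [].
  by rewrite -signr_odd /= (negbTE Hn) expr0 mulr1 addrN.
rewrite /stationary_prob !big_ord_recl big_ord0 E1 addr0.
split.
- case=> Hnn Hs Heq.
  have H0 := Heq ord0; have H1 := Heq ord_max.
  rewrite SS Hs expr1n mulr1 /sg2 eqxx mulr1 in H0.
  rewrite SS Hs expr1n mulr1 /sg2 in H1.
  have : (ord_max == ord0 :> 'I_2) = false by [].
  move=> Hf; rewrite Hf mulrN1 in H1.
  set t := z ord0 - z ord_max in H0 H1.
  have Hz0 := Hnn ord0; have Hz1 := Hnn ord_max.
  suff Ht : t = 0.
    move=> i; case: (Ez i) => ->; rewrite /t in Ht; lra.
  apply/eqP; apply: contraT => Ht.
  have Htt : t = 2 * b * t ^+ n.+2 by rewrite /t; lra.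
  have Hu : 1 = 2 * b * t ^+ n.+1.
    apply: (mulfI Ht); rewrite mulr1 {1}Htt exprS; ring.
  have Htb : -1 <= t <= 1 by rewrite /t; apply/andP; split; lra.
  have Hun : `|t ^+ n.+1| <= 1.
    rewrite normrX; apply: exprn_ile1 => //; rewrite ler_norml; exact: Htb.
  have Hwn : `|2 * b| <= 1 by rewrite ler_norml.
  have Hw : `|2 * b| = 1.
    apply/eqP; rewrite eq_le Hwn /=.
    have : `|2 * b * t ^+ n.+1| = 1 by rewrite -Hu normr1.
    rewrite normrM => Hw1.
    by have := ler_piMr (normr_ge0 (2 * b)) Hun; rewrite Hw1.
  move: Hw; case: (ger0P (2 * b)) => _ Hw.
  + by case/negP: Hbh; apply/eqP; lra.
  + have Eb : b = - 2^-1 by lra.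
    case Hn : (odd n).
    * have : 0 <= t ^+ n.+1 by apply: exprn_even_ge0; rewrite /= Hn.
      rewrite Eb in Hu; lra.
    * by case/negP: (Hbo (negbT Hn)); apply/eqP.
- move=> Hz; split.
  + by move=> i; rewrite Hz; lra.
  + by rewrite !Hz; lra.
  + move=> i; rewrite SS !Hz subrr expr0n /= mulr0 addr0.
    have -> : (2^-1 + 2^-1 : R) = 1 by lra.
    by rewrite expr1n mulr1.
Qed.
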